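(* Let ${\mathcal O}$ be a non-even nilpotent orbit with Jordan type ${\bf d}=[d_1,\dots,d_k]$ in a classical simple Lie algebra, and let $\Theta_1$ be the set of simple roots of weight $1$ in its weighted Dynkin diagram. If ${\mathcal O}$ is in one of the cases (i) $\mathfrak{sl}_n$; (ii) $\mathfrak{so}_{2n+1}$ (resp. $\mathfrak{sp}_{2n}$) with an odd (resp. even) $q\ge0$ such that $d_1,\dots,d_q$ are odd and $d_{q+1},\dots,d_k$ even; (iii-a) $\mathfrak{so}_{2n}$ with an even $q\ge4$ such that $d_1,\dots,d_q$ are odd and the rest even — then $|\Theta_1|$ is even. If ${\mathcal O}\subset\mathfrak{so}_{2n}$ has exactly two odd parts, at positions $2t-1,2t$ ($t\ge1$), then: if $t=1$, $\alpha_n\in\Theta_1$ and $|\Theta_1|$ is odd; if $k=2t\ge4$, $|\Theta_1|$ is even and $\alpha_{n-1},\alpha_n\in\Theta_1$; if $k>2t\ge4$, $|\Theta_1|$ is even.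
   Context: Parts satisfy $d_1\ge\dots\ge d_k$. Weighted Dynkin diagram: for an $\mathfrak{sl}_2$-triple $(x,y,h)$, $x\in{\mathcal O}$, $h$ in a fixed Cartan subalgebra and dominant, the simple root $\alpha$ gets weight $\alpha(h)\in\{0,1,2\}$; ${\mathcal O}$ is even if no weight equals $1$. Simple roots labelled as in Bourbaki ($\alpha_{n-1},\alpha_n$ the fork nodes in type $D_n$). *)

(* Defs.v *)
From HB Require Import structures.
From mathcomp Require Import all_boot all_order all_algebra.
Set Implicit Arguments. Unset Strict Implicit. Unset Printing Implicit Defensive.
Import Order.TTheory GRing.Theory Num.Theory.

(* Classical simple Lie algebras, indexed by a type tag and n:
   TA n = sl_n (rank n-1, natural rep of dim n),
   TB n = so_{2n+1}, TC n = sp_{2n}, TD n = so_{2n} (rank n).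
   Simple roots alpha_1..alpha_rank labelled as in Bourbaki. *)
Inductive ctype := TA | TB | TC | TD.

Definition natdim (T : ctype) (n : nat) : nat :=
  match T with TA => n | TB => n.*2.+1 | TC => n.*2 | TD => n.*2 end.

Definition rank (T : ctype) (n : nat) : nat :=
  match T with TA => n.-1 | _ => n end.

Definition is_jordan_type (T : ctype) (n : nat) (d : seq nat) : bool :=
  [&& sorted geq d, all (fun x => 0 < x) d, sumn d == natdim T n &
   match T with
   | TA => true
   | TB | TD => all (fun e => ~~ odd e ==> ~~ odd (count_mem e d)) d
   | TC => all (fun e => odd e ==> ~~ odd (count_mem e d)) d
   end].

(* eigenvalues of ad-semisimple h of an sl2-triple on the natural rep:
   each part d_i contributes d_i-1, d_i-3, ..., 1-d_i. *)
Definition hvals (d : seq nat) : seq int :=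
  flatten [seq [seq ((di%:Z - 1 - (2 * j)%:Z)%R) | j <- iota 0 di] | di <- d].

(* sorted non-increasingly: dominant representative *)
Definition hsorted (d : seq nat) : seq int :=
  sort (fun x y : int => (y <= x)%R) (hvals d).

Definition hcoord (d : seq nat) (i : nat) : int := nth 0%R (hsorted d) i.

(* weight alpha_i(h) of the simple root alpha_i, 1 <= i <= rank *)
Definition wdd (T : ctype) (n : nat) (d : seq nat) (i : nat) : int :=
  let h := hcoord d in
  match T with
  | TA => (h i.-1 - h i)%R
  | TB => if i == n then h n.-1 else (h i.-1 - h i)%R
  | TC => if i == n then (2 * h n.-1)%R else (h i.-1 - h i)%R
  | TD => if i == n then (h n.-2 + h n.-1)%R else (h i.-1 - h i)%R
  end.

Definition Theta1 (T : ctype) (n : nat) (d : seq nat) : seq nat :=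
  [seq i <- iota 1 (rank T n) | wdd T n d i == 1%R].

Definition is_even_orbit (T : ctype) (n : nat) (d : seq nat) : bool :=
  all (fun i => wdd T n d i != 1%R) (iota 1 (rank T n)).

(* Main.v *)
Require Import Defs.
From mathcomp Require Import all_boot all_order all_algebra zify.
Import Order.TTheory GRing.Theory Num.Theory.
Set Implicit Arguments. Unset Strict Implicit. Unset Printing Implicit Defensive.

Definition ge_int := (fun x y : int => (y <= x)%R).

Lemma ge_trans : transitive ge_int.
Proof. by move=> x y z /= h1 h2; apply: le_trans h2 h1. Qed.

Lemma ge_total : total ge_int.
Proof. by move=> x y /=; rewrite orbC le_total. Qed.

Fixpoint gaps (s : seq int) : nat :=
  if s is x :: s' then
    (if s' is y :: _ then ((x - y == 1)%R : nat) else 0) + gaps s'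
  else 0.

Lemma iota1S r : iota 1 r = map S (iota 0 r).
Proof. by rewrite -[1]/(1+0) iotaDl. Qed.

Lemma gaps_idx (s : seq int) :
  count (fun i => (nth 0 s i - nth 0 s i.+1 == 1)%R) (iota 0 (size s).-1) = gaps s.
Proof.
elim: s => [|x s IH] //=. case: s IH => [|y s] IH //=.
rewrite iota1S count_map; congr (_ + _); exact: IH.
Qed.

Lemma gaps_take (s : seq int) r : r <= size s ->
  count (fun i => (nth 0 s i - nth 0 s i.+1 == 1)%R) (iota 0 r.-1) = gaps (take r s).
Proof.
move=> hr; rewrite -gaps_idx size_takel //; apply: eq_in_count => i.
rewrite mem_iota => /andP[_ hi]; rewrite !nth_take //; lia.
Qed.

Lemma sorted_le_head x (s : seq int) : sorted ge_int (x :: s) -> forall w, w \in s -> (w <= x)%R.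
Proof.
rewrite /= (path_sortedE ge_trans) => /andP[/allP H _] w /H //.
Qed.

Lemma gaps_count (s R : seq int) : sorted ge_int s -> uniq R -> {subset s <= R} ->
  gaps s = count (fun v => (v \in s) && ((v - 1)%R \in s)) R.
Proof.
move=> + uR; elim: s => [|x s IH] hs sR.
  by rewrite /= (eq_count (a2 := pred0)) ?count_pred0.
have hx := sorted_le_head hs.
have hs' : sorted ge_int s by move: hs => /= /path_sorted.
have sR' : {subset s <= R} by move=> w hw; apply: sR; rewrite inE hw orbT.
case: s IH hs hx hs' sR sR' => [|y s] IH hs hx hs' sR sR'.
  rewrite /= (eq_count (a2 := pred0)) ?count_pred0 // => v /=.
  rewrite !inE; apply/negbTE; apply/negP => /andP[/eqP -> /eqP]; lia.
have hy := sorted_le_head hs'.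
have hyx : (y <= x)%R by apply: hx; rewrite inE eqxx.
have -> : gaps (x :: y :: s) = ((x - y == 1)%R : nat) + gaps (y :: s) by [].
rewrite (IH hs' sR').
set A := fun v => (v \in y :: s) && ((v - 1)%R \in y :: s).
set B := fun v => (v == x) && (x - y == 1)%R.
have E1 : count (fun v => (v \in x :: y :: s) && ((v - 1)%R \in x :: y :: s)) R = count (predU A B) R.
  apply: eq_count => v /=; rewrite /A /B.
  rewrite (in_cons x (y :: s)) (in_cons x (y :: s) (v - 1)%R).
  have [vx|vx] := eqVneq v x.
    subst v; have nx : ((x - 1)%R == x) = false by apply/eqP; lia.
    rewrite nx orTb andTb orFb andTb.
    case: (boolP (x \in y :: s)) => hxin.
      have xy : x = y by move: hxin; rewrite inE => /orP[/eqP //|/hy hxy]; apply/eqP; rewrite eq_le hxy hyx.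
      subst y; have -> : ((x - x)%R == 1%R) = false by apply/eqP; lia.
      by rewrite orbF.
    rewrite andFb orFb.
    apply/idP/idP.
      rewrite inE => /orP[/eqP h|h]; first by apply/eqP; lia.
      have h1 := hy _ h.
      have h2 : y != x by apply/negP => /eqP xy; move: hxin; rewrite xy inE eqxx.
      apply/eqP; move: h2 => /eqP h2; lia.
    by move=> /eqP h; rewrite inE; apply/orP; left; apply/eqP; lia.
  rewrite orFb andFb orbF.
  case: (boolP (v \in y :: s)) => hv; last by rewrite !andFb.
  have hvx : (v <= x)%R by move: hv; rewrite inE => /orP[/eqP ->//|/hy h]; apply: le_trans h hyx.
  have -> : ((v - 1)%R == x) = false by apply/eqP; lia.
  by [].
have E2 : count (predI A B) R = 0.
  rewrite (eq_count (a2 := pred0)) ?count_pred0 // => v /=; rewrite /A /B.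
  apply/negbTE/negP => /andP[/andP[hv _] /andP[/eqP vx /eqP xy]].
  subst v; move: hv; rewrite inE => /orP[/eqP h|/hy h]; lia.
have E3 : count B R = (x - y == 1)%R.
  rewrite /B; case: (x - y == 1)%R; last by rewrite (eq_count (a2 := pred0)) ?count_pred0 // => v /=; rewrite andbF.
  rewrite (eq_count (a2 := pred1 x)); last by move=> v /=; rewrite andbT.
  by rewrite (count_uniq_mem _ uR) sR // inE eqxx.
have H := count_predUI A B R; rewrite E2 addn0 in H.
rewrite E1 H E3 addnC //.
Qed.

Lemma sorted_thr (s : seq int) (P : pred int) i : sorted ge_int s ->
  (forall x y, (y <= x)%R -> P y -> P x) -> i < size s ->
  P (nth 0%R s i) = (i < count P s).
Proof.
move=> hs hP; elim: s i hs => [|x s IH] i hs //=.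
have hx := sorted_le_head hs.
have hs' : sorted ge_int s by move: hs => /= /path_sorted.
case: (boolP (P x)) => Px.
  case: i => [|i] //= hi; rewrite IH //.
have c0 : count P s = 0.
  apply/eqP; rewrite -leqn0 leqNgt -has_count; apply/hasPn => w /hx hw.
  by apply/negP => Pw; move: Px; rewrite (hP _ _ hw Pw).
rewrite c0 /=; case: i => [|i] /= hi; first by apply/negbTE.
apply/negP => Pw; move: Px; rewrite (hP _ _ (hx _ (mem_nth 0%R hi)) Pw) //.
Qed.

Lemma sorted_nth_le (s : seq int) i j : sorted ge_int s -> i <= j -> j < size s ->
  (nth 0%R s j <= nth 0%R s i)%R.
Proof.
move=> hs hij hj.
have := sorted_leq_nth ge_trans (fun x => lexx x) 0 hs.
move=> H; apply: (H i j) => //. all: rewrite ?inE /=. all: lia.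
Qed.

Lemma cnt_ab a b N : count (fun j => (a <= j) && (j < b)) (iota 0 N) = minn b N - minn a N.
Proof.
elim: N => [|N IH]; first by rewrite /=; lia.
rewrite -addn1 iotaD count_cat IH /= add0n addn0.
case: (boolP (a <= N)) => h1; case: (boolP (N < b)) => h2 /=. all: lia.
Qed.


Definition block (di : nat) : seq int := [seq ((di%:Z - 1 - (2 * j)%:Z)%R) | j <- iota 0 di].

Lemma hvals_cons di d : hvals (di :: d) = block di ++ hvals d.
Proof. by []. Qed.

Lemma mem_block v di : (v \in block di) = (absz v < di) && (odd (absz v) != odd di).
Proof.
apply/mapP/andP.
- by case=> j; rewrite mem_iota => /andP[_ hj] ->; split; lia.
- case=> h1 h2; case: (boolP (0 <= v)%R) => hv.
  + exists ((di - 1 - absz v) %/ 2); first by rewrite mem_iota; lia.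
    lia.
  + exists ((di - 1 + absz v) %/ 2); first by rewrite mem_iota; lia.
    lia.
Qed.

Lemma mem_hvals v d : (v \in hvals d) = has (fun di => (absz v < di) && (odd (absz v) != odd di)) d.
Proof. by elim: d => [|di d IH] //; rewrite hvals_cons mem_cat mem_block IH. Qed.

Definition Ev (d : seq nat) := \max_(x <- d | ~~ odd x) x.
Definition Ov (d : seq nat) := \max_(x <- d | odd x) x.

Lemma has_max (P : pred nat) a d : has (fun x => P x && (a < x)) d = (a < \max_(x <- d | P x) x).
Proof.
elim: d => [|x d IH]; first by rewrite big_nil.
by rewrite big_cons /= IH; case: (P x) => //=; rewrite leq_max.
Qed.

Definition Snat d a := (odd a && (a < Ev d)) || (~~ odd a && (a < Ov d)).

Lemma mem_hs v d : (v \in hsorted d) = Snat d (absz v).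
Proof.
rewrite /hsorted mem_sort mem_hvals /Snat; case: (boolP (odd (absz v))) => ho /=.
  rewrite orbF /Ev -has_max; apply: eq_has => x /=; case: (odd x) => //=; rewrite ?andbT ?andbF //.
rewrite /Ov -has_max; apply: eq_has => x /=; case: (odd x) => //=; rewrite ?andbT ?andbF //.
Qed.

Lemma Ev_even d : ~~ odd (Ev d).
Proof.
rewrite /Ev; elim: d => [|x d IH]; rewrite ?big_nil ?big_cons //.
case: ifP => // hx; rewrite /maxn; case: ifP => //; by rewrite hx.
Qed.

Lemma Ov_odd d : (Ov d == 0) || odd (Ov d).
Proof.
rewrite /Ov; elim: d => [|x d IH]; rewrite ?big_nil ?big_cons //.
case: ifP => // hx; rewrite /maxn; case: ifP => //; by rewrite hx orbT.
Qed.

Lemma Snat_pair d a : Snat d a && Snat d a.+1 = (a < minn (Ev d) (Ov d)).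
Proof.
have := Ev_even d; have := Ov_odd d; rewrite /Snat.
move: (Ev d) (Ov d) => E O; lia.
Qed.

Lemma Snat_bound d a : Snat d a -> a < Ev d + Ov d.
Proof. rewrite /Snat; lia. Qed.

Lemma size_hs d : size (hsorted d) = sumn d.
Proof.
rewrite /hsorted size_sort; elim: d => [|di d IH] //.
by rewrite hvals_cons size_cat IH size_map size_iota.
Qed.

Lemma cnt_lt b N : count (fun j => j < b) (iota 0 N) = minn b N.
Proof. by rewrite -(eq_count (a1 := fun j => (0 <= j) && (j < b))) // cnt_ab; lia. Qed.

Lemma count_block_zero di : count (fun v => v == 0%R) (block di) = odd di.
Proof.
rewrite count_map (eq_in_count (a2 := fun j => (di./2 <= j) && (j < di./2 + odd di))) ?cnt_ab.
  lia.
move=> j; rewrite mem_iota => /andP[_ hj] /=; lia.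
Qed.

Lemma count_block_pos di : count (fun v => 0 < v)%R (block di) = di./2.
Proof.
rewrite count_map (eq_in_count (a2 := fun j => (0 <= j) && (j < di./2))) ?cnt_ab.
  lia.
move=> j; rewrite mem_iota => /andP[_ hj] /=; lia.
Qed.

Lemma count_block_neg di : count (fun v => v < 0)%R (block di) = di./2.
Proof.
rewrite count_map (eq_in_count (a2 := fun j => (di - di./2 <= j) && (j < di))) ?cnt_ab.
  lia.
move=> j; rewrite mem_iota => /andP[_ hj] /=; lia.
Qed.

Lemma count_hv_zero d : count (fun v => v == 0%R) (hvals d) = count odd d.
Proof. by elim: d => [|di d IH] //; rewrite hvals_cons count_cat count_block_zero IH. Qed.

Lemma count_hv_posneg d : count (fun v => 0 < v)%R (hvals d) = count (fun v => v < 0)%R (hvals d).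
Proof. by elim: d => [|di d IH] //; rewrite hvals_cons !count_cat count_block_pos count_block_neg IH. Qed.

Lemma count_trich (s : seq int) : size s = count (fun v => 0 < v)%R s + count (fun v => v == 0%R) s + count (fun v => v < 0)%R s.
Proof. elim: s => [|x s IH] //=; rewrite IH; case: ltrgt0P => _ /=; lia. Qed.

Lemma count_ge0 (s : seq int) : count (fun v => 0 <= v)%R s = count (fun v => 0 < v)%R s + count (fun v => v == 0%R) s.
Proof. elim: s => [|x s IH] //=; rewrite IH; case: ltrgt0P => _ /=; lia. Qed.

Lemma hs_sorted d : sorted ge_int (hsorted d).
Proof. rewrite /hsorted; exact: (@sort_sorted _ ge_int ge_total). Qed.

Definition Pc d := count (fun v => 0 < v)%R (hvals d).

Lemma size_hs_P d : sumn d = (Pc d).*2 + count odd d.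
Proof.
rewrite -size_hs (count_trich (hsorted d)) /hsorted !count_sort count_hv_zero -count_hv_posneg /Pc.
lia.
Qed.

Lemma hs_pos d i : i < sumn d -> (0 < hcoord d i)%R = (i < Pc d).
Proof.
move=> hi.
have hP : forall x y : int, (y <= x)%R -> (0 < y)%R -> (0 < x)%R.
  by move=> x y hxy hy; apply: lt_le_trans hy hxy.
have hi' : i < size (hsorted d) by rewrite size_hs.
rewrite /hcoord (sorted_thr (P := fun v => 0 < v)%R i (hs_sorted d) hP hi').
by rewrite /hsorted count_sort.
Qed.

Lemma hs_nneg d i : i < sumn d -> (0 <= hcoord d i)%R = (i < Pc d + count odd d).
Proof.
move=> hi.
have hP : forall x y : int, (y <= x)%R -> (0 <= y)%R -> (0 <= x)%R.
  by move=> x y hxy hy; apply: le_trans hy hxy.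
have hi' : i < size (hsorted d) by rewrite size_hs.
rewrite /hcoord (sorted_thr (P := fun v => 0 <= v)%R i (hs_sorted d) hP hi').
by rewrite count_ge0 /hsorted !count_sort count_hv_zero.
Qed.

Lemma hs_zero d i : Pc d <= i < Pc d + count odd d -> hcoord d i = 0%R.
Proof.
move=> hi; have hs := size_hs_P d.
have h1 := hs_pos (i:=i) (d:=d); have h2 := hs_nneg (i:=i) (d:=d).
have hi' : i < sumn d by lia.
move: (h1 hi') (h2 hi'); lia.
Qed.


Lemma mem_take_hs d m v : 0 < m -> m <= sumn d -> hcoord d m.-1 = 0%R ->
  (v \in take m (hsorted d)) = (v \in hsorted d) && (0 <= v)%R.
Proof.
move=> hm hms h0.
have hsz : size (hsorted d) = sumn d := size_hs d.
apply/idP/idP.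
- move=> hv; rewrite (mem_take hv) /=.
  move: hv => /(nthP 0%R) [i]; rewrite size_takel ?hsz // => hi <-; rewrite nth_take //.
  have hle : (nth 0%R (hsorted d) m.-1 <= nth 0%R (hsorted d) i)%R.
    by apply: sorted_nth_le; [exact: hs_sorted | lia | rewrite hsz; lia].
  by move: hle; rewrite -/(hcoord d m.-1) h0.
- case/andP => /(nthP 0%R) [i hi <-] hv.
  case: (ltnP i m) => him.
    by rewrite -(nth_take 0%R him); apply: mem_nth; rewrite size_takel ?hsz.
  have: (nth 0%R (hsorted d) i <= nth 0%R (hsorted d) m.-1)%R.
    by apply: sorted_nth_le; [exact: hs_sorted| lia | done].
  rewrite -/(hcoord d m.-1) h0 => hle.
  have -> : nth 0%R (hsorted d) i = 0%R by apply/eqP; rewrite eq_le hle hv.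
  have hm1 : m.-1 < m by lia.
  have : nth 0%R (take m (hsorted d)) m.-1 \in take m (hsorted d).
    by apply: mem_nth; rewrite size_takel ?hsz; lia.
  by rewrite (nth_take 0%R hm1) -/(hcoord d m.-1) h0.
Qed.

Lemma gaps_take_zero d m : 0 < m -> m <= sumn d -> hcoord d m.-1 = 0%R ->
  gaps (take m (hsorted d)) = minn (Ev d) (Ov d).
Proof.
move=> hm hms h0.
set N := Ev d + Ov d.
set R := 0%R :: [seq (Posz j.+1) | j <- iota 0 N].
have hmem := fun v => mem_take_hs v hm hms h0.
rewrite (@gaps_count _ R).
- have e : (0 <= (0:int) - 1)%R = false by [].
  rewrite /R /= hmem (hmem (0 - 1)%R) e !andbF add0n count_map.
  rewrite (eq_in_count (a2 := fun j => j < minn (Ev d) (Ov d))) ?cnt_lt.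
    rewrite /N; lia.
  move=> j _ /=; rewrite !hmem !mem_hs.
  have -> : ((Posz j.+1) - 1)%R = Posz j by lia.
  by rewrite /= andbT andbT andbC Snat_pair.
- exact: take_sorted (hs_sorted d).
- rewrite /R /= map_inj_uniq ?iota_uniq ?andbT; last by move=> a b [].
  by apply/mapP => [[j _]].
- move=> v; rewrite hmem mem_hs => /andP[hv hv0].
  have hb := Snat_bound hv.
  rewrite /R inE; case: (boolP (v == 0%R)) => // hv1 /=.
  apply/mapP; exists (absz v).-1; first by rewrite mem_iota; lia.
  lia.
Qed.

Lemma gaps_all d : gaps (hsorted d) = (minn (Ev d) (Ov d)).*2.
Proof.
set m := minn (Ev d) (Ov d).
set N := Ev d + Ov d + 1.
set R := [seq Posz j | j <- iota 0 N] ++ [seq Negz j | j <- iota 0 N].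
rewrite (@gaps_count _ R).
- rewrite count_cat !count_map.
  rewrite (eq_in_count (a1 := preim _ _) (a2 := fun j => (0 <= j) && (j < m + (0 < m)))); last first.
    move=> j _ /=; rewrite !mem_hs.
    case: j => [|k].
      have -> : absz ((Posz 0) - 1)%R = 1 by [].
      by rewrite /= Snat_pair -/m; lia.
    have -> : ((Posz k.+1) - 1)%R = Posz k by lia.
    by rewrite /= andbC Snat_pair -/m; lia.
  rewrite (eq_in_count (a1 := preim _ _) (a2 := fun j => (0 <= j) && (j < m.-1))); last first.
    move=> j _ /=; rewrite !mem_hs.
    have -> : (Negz j - 1)%R = Negz j.+1 by lia.
    by rewrite /= Snat_pair -/m; lia.
  rewrite !cnt_ab /N /m; lia.
- exact: hs_sorted.
- rewrite cat_uniq !map_inj_uniq ?iota_uniq /=; try by move=> a b [].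
  rewrite andbT; apply/hasPn => x /mapP [j _ ->]; apply/mapP => [[k _]] //.
- move=> v; rewrite mem_hs => hv; have hb := Snat_bound hv.
  rewrite mem_cat; apply/orP; case: v hv hb => k hv hb.
    by left; apply/mapP; exists k => //; rewrite mem_iota /N; lia.
  by right; apply/mapP; exists k => //; rewrite mem_iota /N; move: hb => /=; lia.
Qed.


Lemma size_Theta_count T n d :
  size (Theta1 T n d) = count (fun i => wdd T n d i.+1 == 1%R) (iota 0 (rank T n)).
Proof. by rewrite /Theta1 size_filter iota1S count_map. Qed.

Lemma theta_A n d : sumn d = n -> size (Theta1 TA n d) = gaps (hsorted d).
Proof.
move=> hn; rewrite size_Theta_count /= -gaps_idx size_hs hn.
by apply: eq_count => i.
Qed.

Lemma theta_B n d : sumn d = n.*2.+1 -> hcoord d n = 0%R ->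
  size (Theta1 TB n d) = gaps (take n.+1 (hsorted d)).
Proof.
move=> hs h0; rewrite size_Theta_count /=.
rewrite -(gaps_take (s := hsorted d) (r := n.+1)); last by rewrite size_hs hs; lia.
apply: eq_in_count => i; rewrite mem_iota => /andP[_ hi] /=.
case: ifP => [/eqP e|_] //.
subst n; rewrite /= -/(hcoord d i) -/(hcoord d i.+1) h0 subr0 //.
Qed.

Lemma iota_last n : 0 < n -> iota 0 n = iota 0 n.-1 ++ [:: n.-1].
Proof. by case: n => // n _; have := iotaD 0 n 1; rewrite addn1 add0n => ->. Qed.

Lemma theta_C n d : 0 < n -> sumn d = n.*2 ->
  size (Theta1 TC n d) = gaps (take n (hsorted d)).
Proof.
move=> hn hs; rewrite size_Theta_count /= (iota_last hn) count_cat /=.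
have -> : (n.-1.+1 == n) = true by apply/eqP; lia.
have -> : ((2 * hcoord d n.-1)%R == 1%R) = false by apply/eqP; lia.
have e0 : forall k, k + false = k := addn0.
rewrite e0 -(gaps_take (s := hsorted d) (r := n)); last by rewrite size_hs hs; lia.
apply: eq_in_count => i; rewrite mem_iota => /andP[_ hi] /=.
by case: ifP => [/eqP e|_] //; lia.
Qed.

Lemma theta_D n d : 1 < n -> sumn d = n.*2 ->
  size (Theta1 TD n d) = gaps (take n (hsorted d)) + (hcoord d n.-2 + hcoord d n.-1 == 1%R)%R.
Proof.
move=> hn hs; have hn' : 0 < n by lia.
rewrite size_Theta_count /= (iota_last hn') count_cat /=.
have -> : (n.-1.+1 == n) = true by apply/eqP; lia.
rewrite addn0 -(gaps_take (s := hsorted d) (r := n)); last by rewrite size_hs hs; lia.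
congr (_ + _).
apply: eq_in_count => i; rewrite mem_iota => /andP[_ hi] /=.
case: ifP => [/eqP e|_] //. by move: e hi => <-; rewrite add0n /= ltnn.
Qed.

Lemma not_even_pos T n d : ~~ is_even_orbit T n d -> 0 < size (Theta1 T n d).
Proof.
rewrite /is_even_orbit /Theta1 size_filter -has_count; apply: contraR => /hasPn H.
by apply/allP => i /H.
Qed.

Lemma count_odd_q d q : q <= size d ->
  (forall i, i < size d -> odd (nth 0 d i) = (i < q)) -> count odd d = q.
Proof.
move=> hq H; rewrite -[in LHS](mkseq_nth 0 d) /mkseq count_map.
rewrite (eq_in_count (a2 := fun i => i < q)) ?cnt_lt; first lia.
by move=> i; rewrite mem_iota => /andP[_ hi]; exact: H.
Qed.

Lemma count_odd_t d t : 1 <= t -> t.*2 <= size d ->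
  (forall i, i < size d -> odd (nth 0 d i) = (i == t.*2 - 2) || (i == t.*2 - 1)) ->
  count odd d = 2.
Proof.
move=> ht hq H; rewrite -[in LHS](mkseq_nth 0 d) /mkseq count_map.
rewrite (eq_in_count (a2 := fun i => (t.*2 - 2 <= i) && (i < t.*2))) ?cnt_ab; first lia.
move=> i; rewrite mem_iota => /andP[_ hi] /=; rewrite H //; lia.
Qed.

Lemma geq_trans : transitive geq.
Proof. by move=> a b c h1 h2; apply: leq_trans h2 h1. Qed.

Lemma parts_le_head d0 d x : sorted geq (d0 :: d) -> x \in d0 :: d -> x <= d0.
Proof.
rewrite /= (path_sortedE geq_trans) => /andP[/allP H _].
by rewrite inE => /orP[/eqP -> //|/H].
Qed.

Lemma Ev_le_head d0 d : sorted geq (d0 :: d) -> Ev (d0 :: d) <= d0.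
Proof. by move=> hs; apply/bigmax_leqP_seq => x hx _; apply: parts_le_head hs hx. Qed.

Lemma Ov_le_head d0 d : sorted geq (d0 :: d) -> Ov (d0 :: d) <= d0.
Proof. by move=> hs; apply/bigmax_leqP_seq => x hx _; apply: parts_le_head hs hx. Qed.

Lemma le_Ov d x : x \in d -> odd x -> x <= Ov d.
Proof. by move=> hx ox; apply: (leq_bigmax_seq (F := id)). Qed.

Lemma le_Ev d x : x \in d -> ~~ odd x -> x <= Ev d.
Proof. by move=> hx ox; apply: (leq_bigmax_seq (F := id)). Qed.

Lemma m_head_odd d0 d : sorted geq (d0 :: d) -> odd d0 ->
  minn (Ev (d0 :: d)) (Ov (d0 :: d)) = Ev (d0 :: d).
Proof.
move=> hs od.
have h1 := Ev_le_head hs; have h2 := le_Ov (mem_head d0 d) od.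
have := Ev_even (d0 :: d); have := Ov_odd (d0 :: d); move: h1 h2 od.
move: (Ev (d0 :: d)) (Ov (d0 :: d)) => E O; lia.
Qed.

Lemma Ov_zero d : count odd d = 0 -> Ov d = 0.
Proof.
move=> h; apply/eqP; rewrite -leqn0; apply/bigmax_leqP_seq => x hx ox.
have : 0 < count odd d by rewrite -has_count; apply/hasP; exists x.
by rewrite h.
Qed.

Lemma gaps_O0 d m : Ov d = 0 -> gaps (take m (hsorted d)) = 0.
Proof.
move=> hO; rewrite (@gaps_count _ (undup (take m (hsorted d)))).
- rewrite (eq_in_count (a2 := pred0)) ?count_pred0 // => v _ /=.
  apply/negbTE/negP => /andP[/mem_take h1 /mem_take h2].
  move: h1 h2; rewrite !mem_hs /Snat hO; lia.
- exact: take_sorted (hs_sorted d).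
- exact: undup_uniq.
- by move=> v; rewrite mem_undup.
Qed.

Lemma hn2_one d n : 1 < n -> Pc d = n.-1 -> n.-1 < sumn d -> 1 < Ev d -> hcoord d n.-2 = 1%R.
Proof.
move=> hn hP hsz hE.
have h1 : (1%R : int) \in hsorted d by rewrite mem_hs /Snat /=; lia.
move: h1 => /(nthP 0%R) [i hi hi1]; rewrite size_hs in hi.
have := hs_pos hi; rewrite /hcoord hi1 hP => /esym hi2.
have hpos := hs_pos (i := n.-2) (d := d); rewrite hP in hpos.
have hp : (0 < hcoord d n.-2)%R by rewrite hpos; lia.
have hle : (nth 0%R (hsorted d) n.-2 <= nth 0%R (hsorted d) i)%R.
  by apply: sorted_nth_le; [exact: hs_sorted | lia | rewrite size_hs; lia].
move: hle hp; rewrite /hcoord hi1; lia.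
Qed.

Lemma hn2_not_one d n : Ev d <= 1 -> n.-2 < sumn d -> (hcoord d n.-2 == 1%R) = false.
Proof.
move=> hE hsz; apply/negbTE/negP => /eqP h.
have : hcoord d n.-2 \in hsorted d by apply: mem_nth; rewrite size_hs.
rewrite h mem_hs /Snat /=; lia.
Qed.


Lemma split_head (d : seq nat) : 0 < size d -> exists d0 d', d = d0 :: d'.
Proof. by case: d => // d0 d' _; exists d0, d'. Qed.

Theorem lemma3p2 :
  (* (i) sl_n *)
  (forall (n : nat) (d : seq nat),
      2 <= n -> is_jordan_type TA n d -> ~~ is_even_orbit TA n d ->
      ~~ odd (size (Theta1 TA n d))) /\
  (* (ii) so_{2n+1}, q odd *)
  (forall (n : nat) (d : seq nat) (q : nat),
      1 <= n -> is_jordan_type TB n d -> ~~ is_even_orbit TB n d ->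
      odd q -> q <= size d ->
      (forall i, i < size d -> odd (nth 0 d i) = (i < q)) ->
      ~~ odd (size (Theta1 TB n d))) /\
  (* (ii) sp_{2n}, q even *)
  (forall (n : nat) (d : seq nat) (q : nat),
      1 <= n -> is_jordan_type TC n d -> ~~ is_even_orbit TC n d ->
      ~~ odd q -> q <= size d ->
      (forall i, i < size d -> odd (nth 0 d i) = (i < q)) ->
      ~~ odd (size (Theta1 TC n d))) /\
  (* (iii-a) so_{2n}, q even, q >= 4 *)
  (forall (n : nat) (d : seq nat) (q : nat),
      3 <= n -> is_jordan_type TD n d -> ~~ is_even_orbit TD n d ->
      ~~ odd q -> 4 <= q -> q <= size d ->
      (forall i, i < size d -> odd (nth 0 d i) = (i < q)) ->
      ~~ odd (size (Theta1 TD n d))) /\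
  (* so_{2n} with exactly two odd parts, at positions 2t-1, 2t *)
  (forall (n : nat) (d : seq nat) (t : nat),
      3 <= n -> is_jordan_type TD n d -> ~~ is_even_orbit TD n d ->
      1 <= t -> t.*2 <= size d ->
      (forall i, i < size d ->
         odd (nth 0 d i) = (i == t.*2 - 2) || (i == t.*2 - 1)) ->
      (t = 1 -> n \in Theta1 TD n d /\ odd (size (Theta1 TD n d))) /\
      (size d = t.*2 -> 4 <= t.*2 ->
         ~~ odd (size (Theta1 TD n d)) /\
         n.-1 \in Theta1 TD n d /\ n \in Theta1 TD n d) /\
      (t.*2 < size d -> 4 <= t.*2 -> ~~ odd (size (Theta1 TD n d)))).
Proof.
split.
  move=> n d hn hJ hne; case/and4P: hJ => _ _ /eqP /= hsum _.
  by rewrite theta_A // gaps_all odd_double.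
split.
  move=> n d q hn hJ hne oq hq H; case/and4P: hJ => hsd _ /eqP /= hsum _.
  have cz := count_odd_q hq H.
  have hP := size_hs_P d; rewrite cz hsum in hP.
  have h0 : hcoord d n = 0%R by apply: hs_zero; rewrite cz; lia.
  rewrite theta_B // (gaps_take_zero (d := d) (m := n.+1)) //; try lia.
  have [d0 [d' ed]] : exists d0 d', d = d0 :: d' by apply: split_head; lia.
  subst d; have od : odd d0 by have := H 0 ltac:(done); rewrite /=; lia.
  by rewrite m_head_odd // Ev_even.
split.
  move=> n d q hn hJ hne eq hq H; case/and4P: hJ => hsd _ /eqP /= hsum _.
  have cz := count_odd_q hq H.
  have hP := size_hs_P d; rewrite cz hsum in hP.
  rewrite theta_C //.
  case: (posnP q) => [q0|qpos].
    by rewrite gaps_O0 //; apply: Ov_zero; rewrite cz q0.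
  have h0 : hcoord d n.-1 = 0%R by apply: hs_zero; rewrite cz; lia.
  rewrite (gaps_take_zero (d := d) (m := n)) //; try lia.
  have [d0 [d' ed]] : exists d0 d', d = d0 :: d' by apply: split_head; lia.
  subst d; have od : odd d0 by have := H 0 ltac:(done); rewrite /=; lia.
  by rewrite m_head_odd // Ev_even.
split.
  move=> n d q hn hJ hne eq hq4 hq H; case/and4P: hJ => hsd _ /eqP /= hsum _.
  have cz := count_odd_q hq H.
  have hP := size_hs_P d; rewrite cz hsum in hP.
  have h0 : hcoord d n.-1 = 0%R by apply: hs_zero; rewrite cz; lia.
  have h1 : hcoord d n.-2 = 0%R by apply: hs_zero; rewrite cz; lia.
  rewrite theta_D //; last by lia.
  rewrite (gaps_take_zero (d := d) (m := n)) //; try lia.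
  rewrite h0 h1 addr0 /= addn0.
  have [d0 [d' ed]] : exists d0 d', d = d0 :: d' by apply: split_head; lia.
  subst d; have od : odd d0 by have := H 0 ltac:(done); rewrite /=; lia.
  by rewrite m_head_odd // Ev_even.
move=> n d t hn hJ hne ht ht2 H; case/and4P: hJ => hsd _ /eqP /= hsum _.
have cz := count_odd_t ht ht2 H.
have hP := size_hs_P d; rewrite cz hsum in hP.
have hPn : Pc d = n.-1 by lia.
have h0 : hcoord d n.-1 = 0%R by apply: hs_zero; rewrite cz; lia.
have hT : size (Theta1 TD n d) = minn (Ev d) (Ov d) + (hcoord d n.-2 == 1%R).
  rewrite theta_D //; last by lia.
  rewrite (gaps_take_zero (d := d) (m := n)) //; try lia.
have memn : (n \in Theta1 TD n d) = (hcoord d n.-2 == 1%R).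
  rewrite /Theta1 mem_filter /= eqxx h0 addr0 mem_iota.
  have -> : (1 <= n < 1 + n) = true by lia.
  by rewrite andbT.
have memn1 : (n.-1 \in Theta1 TD n d) = (hcoord d n.-2 == 1%R).
  rewrite /Theta1 mem_filter /= mem_iota.
  have -> : (n.-1 == n) = false by lia.
  have -> : (1 <= n.-1 < 1 + n) = true by lia.
  by rewrite andbT h0 subr0.
have hne' := not_even_pos hne.
have [d0 [d' ed]] : exists d0 d', d = d0 :: d' by apply: split_head; lia.
have key : 4 <= t.*2 -> ~~ odd (size (Theta1 TD n d)) /\
    n.-1 \in Theta1 TD n d /\ n \in Theta1 TD n d.
  move=> ht4.
  have od : ~~ odd d0.
    by have := H 0 ltac:(rewrite ed; done); rewrite ed /=; lia.
  have hx : nth 0 d (t.*2 - 2) \in d.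
    have hlt : t.*2 - 2 < size d by lia.
    exact: mem_nth hlt.
  have ox : odd (nth 0 d (t.*2 - 2)) by rewrite H; lia.
  have h1 := le_Ov hx ox.
  have h2 : Ov d <= d0 by rewrite ed; apply: Ov_le_head; rewrite -ed.
  have h3 : d0 <= Ev d by apply: le_Ev => //; rewrite ed mem_head.
  have hE := Ev_even d; have hO := Ov_odd d.
  have hE1 : 1 < Ev d.
    move: ox h1 h2 h3 hE; move: (nth 0 d (t.*2 - 2)) (Ev d) (Ov d) => x E O; lia.
  have hm : minn (Ev d) (Ov d) = Ov d.
    move: ox h1 h2 h3 hE hO; move: (nth 0 d (t.*2 - 2)) (Ev d) (Ov d) => x E O; lia.
  have hh := hn2_one (n := n) ltac:(lia) hPn ltac:(lia) hE1.
  rewrite hT memn memn1 hm hh eqxx; split => //.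
  move: ox h1 hO; move: (nth 0 d (t.*2 - 2)) (Ov d) => x O; lia.
split.
  move=> t1; subst t.
  have od : odd d0 by have := H 0 ltac:(rewrite ed; done); rewrite ed /=; lia.
  have hm : minn (Ev d) (Ov d) = Ev d by rewrite ed m_head_odd // -ed.
  have hE := Ev_even d.
  case: (leqP (Ev d) 1) => hE1.
    rewrite hT hm hn2_not_one // in hne'; last by lia.
    move: hne' hE hE1; move: (Ev d) => E; lia.
  have hh := hn2_one (n := n) ltac:(lia) hPn ltac:(lia) hE1.
  rewrite memn hT hm hh eqxx; split => //.
  move: hE hE1; move: (Ev d) => E; lia.
split.
  by move=> _ /key.
by move=> _ /key [].
Qed.
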